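(* Let $X$ be a set and let $T_1,T_2:\mathcal P(X)\to\mathcal P(X)$ be order reversing quasi involutions with $T_1(\mathcal P(X))=T_2(\mathcal P(X))=:\mathcal C_0$ and $T_1|_{\mathcal C_0}=T_2|_{\mathcal C_0}$. Then $T_1=T_2$.
   Context: $\mathcal P(X)$ denotes the power set of $X$. A map $T:\mathcal P(X)\to\mathcal P(X)$ is an order reversing quasi involution if for all $K,L\subseteq X$: (i) $K\subseteq TTK$, and (ii) $L\subseteq K$ implies $TK\subseteq TL$. *)

(* Defs.v *)
Definition subset {X : Type} (K L : X -> Prop) : Prop := forall x, K x -> L x.

Definition order_reversing_quasi_involution {X : Type}
  (T : (X -> Prop) -> (X -> Prop)) : Prop :=
  (forall K, subset K (T (T K))) /\
  (forall K L, subset L K -> subset (T K) (T L)).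

Definition image_of {X : Type} (T : (X -> Prop) -> (X -> Prop)) (C : X -> Prop) : Prop :=
  exists K, C = T K.

(* Main.v *)
Require Import Defs.
From Stdlib Require Import FunctionalExtensionality PropExtensionality.

Lemma ttt {X : Type} (T : (X -> Prop) -> (X -> Prop)) :
  order_reversing_quasi_involution T -> forall K, T K = T (T (T K)).
Proof.
  intros [Ha Hb] K. apply functional_extensionality; intro x.
  apply propositional_extensionality; split.
  - apply Ha.
  - apply Hb, Ha.
Qed.

Theorem proposition8p1 (X : Type) (T1 T2 : (X -> Prop) -> (X -> Prop))
  (H1 : order_reversing_quasi_involution T1)
  (H2 : order_reversing_quasi_involution T2)
  (Himg : forall C, image_of T1 C <-> image_of T2 C)
  (Hres : forall C, image_of T1 C -> T1 C = T2 C) :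
  T1 = T2.
Proof.
  apply functional_extensionality; intro K.
  apply functional_extensionality; intro x.
  apply propositional_extensionality; split; intro Hx.
  - rewrite (ttt T1 H1) in Hx.
    rewrite Hres in Hx by (exists (T1 K); reflexivity).
    destruct H2 as [_ Hb2]. apply (Hb2 _ _ (proj1 H1 K)), Hx.
  - rewrite (ttt T2 H2) in Hx.
    assert (Hi : image_of T1 (T2 (T2 K))) by (apply Himg; exists (T2 K); reflexivity).
    rewrite <- (Hres _ Hi) in Hx.
    destruct H1 as [_ Hb1]. apply (Hb1 _ _ (proj1 H2 K)), Hx.
Qed.
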